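(* For every $\alpha\in(m,M)$, where $m=\inf_{n\ge1}b_n$ and $M=\sup_{n\ge1}b_n$, the limit $\lim_{x\to+\infty}\frac{D(x,\alpha)}{x}$ does not exist, where $D(x,\alpha)=\#\{n\in\mathbb Z:1\le n\le x,\ b_n\le\alpha\}$. That is, $(b_n)$ has no cumulative distribution function at any point of $(m,M)$.
   Context: Fix integers $p\ge 3$ and $2\le s<p$, and a set $A\subset\{0,1,\dots,p-1\}$ with $\#A=s$. Let $h:\{0,1,\dots,s-1\}\to A$ be the unique strictly increasing bijection. For a positive integer $n$ with base-$s$ expansion $n=\sum_{i=0}^k\varepsilon_i s^i$ ($\varepsilon_i\in\{0,\dots,s-1\}$, $\varepsilon_k\ne 0$), put $a_n=\sum_{i=0}^k h(\varepsilon_i)p^i$. Let $b_n=a_n/n^{\log_s p}$ for $n\ge1$. *)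

(* Defs.v *)
From Stdlib Require Import Reals Lia List.
From Coquelicot Require Import Coquelicot.
Open Scope R_scope.

(* a_n computed from the base-s expansion of n (fuel = n suffices since n/s < n):
   a(0) = 0, a(n) = h(n mod s) + p * a(n / s) for n >= 1.
   This equals sum_{i=0}^k h(eps_i) p^i where eps_k is the leading (nonzero) digit. *)
Fixpoint a_aux (s p : nat) (h : nat -> nat) (fuel n : nat) : nat :=
  match fuel with
  | O => O
  | S f => match n with
           | O => O
           | S _ => (h (Nat.modulo n s) + p * a_aux s p h f (Nat.div n s))%nat
           end
  end.

Definition a_seq (s p : nat) (h : nat -> nat) (n : nat) : nat := a_aux s p h n n.

Definition b_seq (s p : nat) (h : nat -> nat) (n : nat) : R :=
  INR (a_seq s p h n) / Rpower (INR n) (ln (INR p) / ln (INR s)).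

Definition D_count (s p : nat) (h : nat -> nat) (x alpha : R) : nat :=
  length (filter (fun n => if Rle_dec (b_seq s p h n) alpha then true else false)
                 (seq 1 (Z.to_nat (Int_part x)))).

(* Main.v *)
Require Import Defs.
From Stdlib Require Import Reals Lia List Lra ZArith.
From Coquelicot Require Import Coquelicot.
Open Scope R_scope.
Local Open Scope nat_scope.

Lemma a_aux_fuel s p h : (2 <= s)%nat -> forall f1 f2 n, (n <= f1)%nat -> (n <= f2)%nat ->
  a_aux s p h f1 n = a_aux s p h f2 n.
Proof.
  intros Hs f1; induction f1 as [|f1 IH]; intros f2 n H1 H2.
  - assert (n = 0%nat) by lia; subst. destruct f2; reflexivity.
  - destruct n as [|n'].
    + destruct f2; reflexivity.
    + destruct f2 as [|f2]; [lia|]. simpl.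
      assert (Hd : (S n' / s < S n')%nat) by (apply Nat.div_lt; lia).
      rewrite (IH f2); [reflexivity | lia | lia].
Qed.

Lemma a_rec s p h n : (2 <= s)%nat -> (1 <= n)%nat ->
  a_seq s p h n = (h (n mod s) + p * a_seq s p h (n / s))%nat.
Proof.
  intros Hs Hn. unfold a_seq. destruct n as [|n']; [lia|].
  simpl a_aux at 1. f_equal. f_equal. apply a_aux_fuel; auto.
  assert (Hd : (S n' / s < S n')%nat) by (apply Nat.div_lt; lia). lia.
Qed.

Lemma divmod_eq s q d : (d < s)%nat -> ((s * q + d) / s = q /\ (s * q + d) mod s = d)%nat.
Proof.
  intros Hd. split.
  - symmetry. apply (Nat.div_unique _ _ _ d); auto.
  - symmetry. apply (Nat.mod_unique _ _ q); auto.
Qed.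

Lemma a_step s p h q d : (2 <= s)%nat -> (d < s)%nat -> (1 <= s * q + d)%nat ->
  a_seq s p h (s * q + d) = (h d + p * a_seq s p h q)%nat.
Proof.
  intros Hs Hd Hn. rewrite a_rec by auto. destruct (divmod_eq s q d Hd) as [E1 E2].
  rewrite E1, E2. reflexivity.
Qed.

Section Blk.
Variables (s p : nat) (h : nat -> nat).
Hypothesis Hs : (2 <= s)%nat.
Hypothesis Hhp : forall i, (i < s)%nat -> (h i < p)%nat.

Lemma block s0 : s0 = s -> forall k Q r, (1 <= Q)%nat -> (r < s0 ^ k)%nat ->
  (p ^ k * a_seq s p h Q <= a_seq s p h (Q * s0 ^ k + r) /\
   a_seq s p h (Q * s0 ^ k + r) + 1 <= p ^ k * (a_seq s p h Q + 1))%nat.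
Proof.
  intros -> k; induction k as [|k IH]; intros Q r HQ Hr.
  - rewrite !Nat.pow_0_r in *. assert (r = 0%nat) by lia. subst. rewrite Nat.mul_1_r, Nat.add_0_r. lia.
  - assert (Hr2 : (r / s < s ^ k)%nat).
    { apply Nat.Div0.div_lt_upper_bound. simpl in Hr. lia. }
    destruct (IH Q (r / s) HQ Hr2) as [IH1 IH2].
    assert (Hm : (r mod s < s)%nat) by (apply Nat.mod_upper_bound; lia).
    assert (E : (Q * s ^ S k + r = s * (Q * s ^ k + r / s) + r mod s)%nat).
    { rewrite (Nat.div_mod r s) at 1 by lia. simpl. nia. }
    assert (Hsk : (1 <= s ^ k)%nat) by (apply Nat.neq_0_lt_0, Nat.pow_nonzero; lia).
    assert (HQs : (1 <= Q * s ^ k)%nat) by (change 1%nat with (1*1)%nat; apply Nat.mul_le_mono; lia).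
    rewrite E. rewrite a_step; [| auto | auto | nia].
    specialize (Hhp _ Hm). rewrite Nat.pow_succ_r'. nia.
Qed.
End Blk.

Lemma a_zero s p h : a_seq s p h 0 = 0.
Proof. reflexivity. Qed.

Section Tail.
Variables (s p : nat) (h : nat -> nat).
Hypothesis Hs : (2 <= s)%nat.
Hypothesis Hp : (2 <= p)%nat.
Hypothesis Hhp : forall i, (i < s)%nat -> (h i < p)%nat.
Hypothesis Hinc : forall i j, (i < j)%nat -> (j < s)%nat -> (h i < h j)%nat.

Lemma Lstep : forall N, 1 <= N ->
  (p - 1) * a_seq s p h (N - 1) + h (s - 1) <= (p - 1) * a_seq s p h N.
Proof.
  intros N. induction N as [N IH] using (well_founded_induction Wf_nat.lt_wf). intros HN.
  assert (Hhs : h (s - 1) < p) by (apply Hhp; lia).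
  pose (q := N / s). pose (d := N mod s).
  assert (Hd : d < s) by (apply Nat.mod_upper_bound; lia).
  assert (EN : N = s * q + d) by (apply Nat.div_mod; lia).
  destruct d as [|d'] eqn:Ed.
  -
    assert (Hq : 1 <= q) by nia.
    assert (Hql : q < N) by nia.
    specialize (IH q Hql Hq).
    assert (E1 : N - 1 = s * (q - 1) + (s - 1)) by nia.
    rewrite E1, EN, Nat.add_0_r.
    rewrite a_step by (auto; lia || nia).
    replace (s * q) with (s * q + 0) by lia.
    rewrite a_step by (auto; lia || nia).
    nia.
  - assert (Hh : h d' < h (S d')) by (apply Hinc; lia).
    destruct (Nat.eq_dec (N - 1) 0) as [Z|NZ].
    + rewrite Z, a_zero.
      assert (q = 0) by nia. assert (d' = 0) by nia. subst d'.
      rewrite EN. replace (s * q + 1) with (s * 0 + 1) by nia.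
      rewrite a_step by (auto; lia). rewrite a_zero. nia.
    + assert (E1 : N - 1 = s * q + d') by lia.
      rewrite E1, EN.
      rewrite a_step by (auto; lia).
      rewrite a_step by (auto; lia).
      assert (Hm : (p - 1) * h d' + (p - 1) <= (p - 1) * h (S d')) by nia.
      nia.
Qed.

Lemma Ltail : forall N j, 1 <= N ->
  (p - 1) * a_seq s p h (N * s ^ j - 1) + h (s - 1) =
  p ^ j * ((p - 1) * a_seq s p h (N - 1) + h (s - 1)).
Proof.
  intros N j HN. induction j as [|j IH].
  - rewrite Nat.pow_0_r, !Nat.mul_1_r, Nat.mul_1_l. reflexivity.
  - assert (Hsj : 1 <= s ^ j) by (apply Nat.neq_0_lt_0, Nat.pow_nonzero; lia).
    assert (HNs : 1 <= N * s ^ j) by nia.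
    assert (E : N * s ^ S j - 1 = s * (N * s ^ j - 1) + (s - 1)).
    { rewrite Nat.pow_succ_r'. nia. }
    rewrite E. rewrite a_step by (auto; lia || nia).
    rewrite Nat.pow_succ_r'. rewrite <- Nat.mul_assoc, <- IH.
    nia.
Qed.

Lemma tail_bound : forall N j, 1 <= N ->
  a_seq s p h (N * s ^ j - 1) <= p ^ j * a_seq s p h N.
Proof.
  intros N j HN. pose proof (Ltail N j HN) as T. pose proof (Lstep N HN) as L.
  assert (H1 : (p - 1) * a_seq s p h (N * s ^ j - 1) <= (p - 1) * (p ^ j * a_seq s p h N)).
  { assert (p ^ j * ((p - 1) * a_seq s p h (N - 1) + h (s - 1)) <= p ^ j * ((p - 1) * a_seq s p h N))
      by (apply Nat.mul_le_mono_l; exact L). nia. }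
  apply Nat.mul_le_mono_pos_l in H1; lia.
Qed.
End Tail.

Local Open Scope R_scope.
Lemma ln_le_xm1 x : 0 < x -> ln x <= x - 1.
Proof.
  intros Hx. rewrite <- (ln_exp (x - 1)). apply ln_le; auto.
  pose proof (exp_ineq1_le (x - 1)). lra.
Qed.

Lemma exp_mono_le a b : a <= b -> exp a <= exp b.
Proof. intros [H|H]; [left; apply exp_increasing; auto | subst; lra]. Qed.

Lemma rp_upper x g : 0 < x -> 0 <= g -> Rpower x g * (1 - g * (x - 1)) <= 1.
Proof.
  intros Hx Hg. unfold Rpower.
  destruct (Rle_dec 0 (1 - g * (x - 1))) as [H|H].
  - assert (E1 : exp (g * ln x) <= exp (g * (x - 1))).
    { apply exp_mono_le. apply Rmult_le_compat_l; auto. apply ln_le_xm1; auto. }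
    assert (E2 : 1 - g * (x - 1) <= exp (- (g * (x - 1)))).
    { pose proof (exp_ineq1_le (- (g * (x - 1)))). lra. }
    apply Rle_trans with (exp (g * (x - 1)) * exp (- (g * (x - 1)))).
    + apply Rmult_le_compat; auto. left; apply exp_pos.
    + rewrite <- exp_plus. replace (g * (x - 1) + - (g * (x - 1))) with 0 by ring.
      rewrite exp_0. lra.
  - pose proof (exp_pos (g * ln x)).
    assert (exp (g * ln x) * (1 - g * (x - 1)) <= 0).
    { apply Rmult_le_0_l; lra. } lra.
Qed.

Lemma rp_key u v g : 0 < u -> u <= v -> 0 <= g ->
  Rpower v g * (1 - g * ((v - u) / u)) <= Rpower u g.
Proof.
  intros Hu Huv Hg.
  assert (Hv : 0 < v) by lra.
  assert (Hx : 0 < v / u) by (apply Rdiv_lt_0_compat; auto).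
  pose proof (rp_upper (v / u) g Hx Hg) as K.
  assert (E : v = u * (v / u)) by (field; lra).
  assert (E2 : (v - u) / u = v / u - 1) by (field; lra).
  rewrite E2. rewrite E at 1. rewrite <- Rpower_mult_distr by auto.
  assert (0 < Rpower u g) by (unfold Rpower; apply exp_pos).
  rewrite Rmult_assoc.
  apply Rle_trans with (Rpower u g * 1); [|lra].
  apply Rmult_le_compat_l; lra.
Qed.

Lemma Rpower_pos x g : 0 < Rpower x g.
Proof. unfold Rpower; apply exp_pos. Qed.

Lemma rp_sk (s p k : nat) : (2 <= s)%nat -> (1 <= p)%nat ->
  Rpower (INR (s ^ k)) (ln (INR p) / ln (INR s)) = INR (p ^ k).
Proof.
  intros Hs Hp.
  assert (Hs0 : 1 < INR s) by (apply lt_1_INR; lia).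
  assert (Hp0 : 0 < INR p) by (apply lt_0_INR; lia).
  assert (Hl : 0 < ln (INR s)) by (rewrite <- ln_1; apply ln_increasing; lra).
  rewrite !pow_INR. unfold Rpower. rewrite ln_pow by lra.
  replace (ln (INR p) / ln (INR s) * (INR k * ln (INR s))) with (INR k * ln (INR p))
    by (field; lra).
  rewrite <- (Rpower_pow k (INR p)) by auto. reflexivity.
Qed.

Lemma rp_mul (s p Q k : nat) : (2 <= s)%nat -> (1 <= p)%nat -> (1 <= Q)%nat ->
  Rpower (INR (Q * s ^ k)) (ln (INR p) / ln (INR s)) =
  Rpower (INR Q) (ln (INR p) / ln (INR s)) * INR (p ^ k).
Proof.
  intros Hs Hp HQ. rewrite mult_INR. rewrite <- Rpower_mult_distr.
  - rewrite rp_sk; auto.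
  - apply lt_0_INR; lia.
  - apply lt_0_INR. apply Nat.neq_0_lt_0, Nat.pow_nonzero; lia.
Qed.

Lemma exists_pow_gt (s : nat) (C : R) : (2 <= s)%nat -> exists j, (1 <= j)%nat /\ C < INR (s ^ j).
Proof.
  intros Hs. destruct (archimed (Rabs C)) as [H1 _].
  exists (S (Z.to_nat (up (Rabs C)))). split; [lia|].
  set (J := S (Z.to_nat (up (Rabs C)))).
  assert (HJ : (J < s ^ J)%nat) by (apply Nat.pow_gt_lin_r; lia).
  apply lt_INR in HJ.
  assert (C < INR J).
  { unfold J. rewrite S_INR.
    assert (Hz : (0 <= up (Rabs C))%Z).
    { apply le_IZR. pose proof (Rabs_pos C). lra. }
    rewrite INR_IZR_INZ, Z2Nat.id by auto. pose proof (Rle_abs C). lra. }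
  lra.
Qed.

Section Win.
Variables (s p : nat) (h : nat -> nat).
Hypothesis Hs : (2 <= s)%nat.
Hypothesis Hp : (2 <= p)%nat.
Hypothesis Hsp : (s <= p)%nat.
Hypothesis Hhp : forall i, (i < s)%nat -> (h i < p)%nat.
Hypothesis Hinc : forall i j, (i < j)%nat -> (j < s)%nat -> (h i < h j)%nat.

Let g := ln (INR p) / ln (INR s).
Let a := a_seq s p h.

Lemma g_nonneg : 0 <= g.
Proof.
  unfold g. assert (1 < INR s) by (apply lt_1_INR; lia).
  assert (1 < INR p) by (apply lt_1_INR; lia).
  assert (0 < ln (INR s)) by (rewrite <- ln_1; apply ln_increasing; lra).
  assert (0 < ln (INR p)) by (rewrite <- ln_1; apply ln_increasing; lra).
  left. apply Rdiv_lt_0_compat; auto.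
Qed.

Lemma pos_nat_pow (b k : nat) : (1 <= b)%nat -> 0 < INR (b ^ k).
Proof. intros. apply lt_0_INR. apply Nat.neq_0_lt_0, Nat.pow_nonzero; lia. Qed.

Lemma low_window N alpha : (1 <= N)%nat -> b_seq s p h N < alpha ->
  exists Q, (1 <= Q)%nat /\ forall k r, (r < s ^ k)%nat -> b_seq s p h (Q * s ^ k + r) <= alpha.
Proof.
  intros HN Hb. unfold b_seq in Hb. fold g in Hb. fold a in Hb.
  set (W := Rpower (INR N) g) in *. set (A := INR (a N)) in *.
  assert (HW : 0 < W) by apply Rpower_pos.
  assert (HA : 0 <= A) by apply pos_INR.
  assert (HAW : A < alpha * W).
  { apply (Rmult_lt_compat_r W) in Hb; auto. unfold Rdiv in Hb.
    rewrite Rmult_assoc, Rinv_l in Hb by lra. lra. }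
  set (d := alpha * W - A).
  assert (Hd : 0 < d) by (unfold d; lra).
  assert (Hal : 0 < alpha) by nra.
  pose proof g_nonneg as Hg.
  destruct (exists_pow_gt s (2 + 2 * alpha * W * g / d + 2 / d) Hs) as [j [Hj1 Hj]].
  assert (Hsj1 : (1 <= s ^ j)%nat) by (apply Nat.neq_0_lt_0, Nat.pow_nonzero; lia).
  assert (Hc1 : 0 <= 2 * alpha * W * g / d).
  { apply Rmult_le_pos; [|left; apply Rinv_0_lt_compat; auto].
    apply Rmult_le_pos; [|auto]. nra. }
  assert (Hc2 : 0 < 2 / d) by (apply Rdiv_lt_0_compat; lra).
  assert (HNs : (2 <= N * s ^ j)%nat).
  { assert (INR 2 < INR (s ^ j)) by (simpl; lra). apply INR_lt in H. nia. }
  exists (N * s ^ j - 1)%nat. split; [lia|].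
  intros k r Hr.
  set (Q := (N * s ^ j - 1)%nat).
  assert (HQ1 : (1 <= Q)%nat) by (unfold Q; lia).
  assert (HQR : INR Q = INR (N * s ^ j) - 1).
  { unfold Q. rewrite minus_INR by lia. simpl. ring. }
  assert (HNsR : INR (s ^ j) <= INR (N * s ^ j)).
  { apply le_INR. nia. }
  assert (HQpos : 0 < INR Q) by (apply lt_0_INR; lia).
  destruct (block s p h Hs Hhp s eq_refl k Q r HQ1 Hr) as [_ Hup].
  pose proof (tail_bound s p h Hs Hp Hhp Hinc N j HN) as Ht. fold a in Hup, Ht.
  fold Q in Ht.
  assert (Hn : INR (a (Q * s ^ k + r)) + 1 <= INR (p ^ k) * (INR (p ^ j) * A + 1)).
  { apply le_INR in Hup. apply le_INR in Ht. rewrite plus_INR, mult_INR, plus_INR in Hup.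
    rewrite mult_INR in Ht. simpl in Hup. fold A in Ht.
    pose proof (pos_nat_pow p k ltac:(lia)). nra. }
  set (pk := INR (p ^ k)) in *. set (pj := INR (p ^ j)) in *.
  assert (Hpk : 0 < pk) by (apply pos_nat_pow; lia).
  assert (Hpj : INR (s ^ j) <= pj).
  { unfold pj. apply le_INR. apply Nat.pow_le_mono_l. lia. }
  set (Rn := Rpower (INR (Q * s ^ k + r)) g).
  set (RQ := Rpower (INR Q) g).
  assert (H1 : RQ * pk <= Rn).
  { unfold RQ, pk, Rn, g. rewrite <- rp_mul by (auto; lia). apply Rle_Rpower_l; auto.
    split; [apply lt_0_INR; nia|]. apply le_INR; lia. }
  assert (H2 : W * pj * (1 - g * (1 / INR Q)) <= RQ).
  { unfold W, pj, RQ, g. rewrite <- rp_mul by (auto; lia).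
    pose proof (rp_key (INR Q) (INR (N * s ^ j)) g HQpos ltac:(lra) Hg) as K.
    replace (INR (N * s ^ j) - INR Q) with 1 in K by lra. exact K. }
  assert (K3 : 2 * alpha * W * g <= d * INR Q).
  { assert (2 * alpha * W * g / d + 1 <= INR Q) by lra.
    apply (Rmult_le_reg_r (/ d)). apply Rinv_0_lt_compat; auto.
    replace (d * INR Q * / d) with (INR Q) by (field; lra).
    replace (2 * alpha * W * g * / d) with (2 * alpha * W * g / d) by (unfold Rdiv; ring).
    lra. }
  assert (H3 : alpha * W * g * (1 / INR Q) <= d / 2).
  { apply (Rmult_le_reg_r (2 * INR Q)); [lra|].
    replace (alpha * W * g * (1 / INR Q) * (2 * INR Q)) with (2 * alpha * W * g) by (field; lra).
    replace (d / 2 * (2 * INR Q)) with (d * INR Q) by field. lra. }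
  assert (H4 : 1 <= pj * d / 2).
  { assert (2 / d <= pj) by lra.
    apply (Rmult_le_compat_r (d / 2)) in H; [|lra].
    replace (2 / d * (d / 2)) with 1 in H by (field; lra).
    unfold Rdiv in *. lra. }
  unfold b_seq. fold g. fold Rn. fold a.
  assert (HRn : 0 < Rn) by apply Rpower_pos.
  apply (Rmult_le_reg_r Rn); auto. unfold Rdiv. rewrite Rmult_assoc, Rinv_l by lra.
  rewrite Rmult_1_r.
  assert (E : alpha * W * pj * (1 - g * (1 / INR Q)) >= pj * A + 1).
  { replace (alpha * W * pj * (1 - g * (1 / INR Q))) with
      (pj * (alpha * W) - pj * (alpha * W * g * (1 / INR Q))) by ring.
    assert (pj * (alpha * W * g * (1 / INR Q)) <= pj * (d / 2)).
    { apply Rmult_le_compat_l; lra. }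
    unfold d in *. unfold Rdiv in *. nra. }
  assert (alpha * RQ * pk <= alpha * Rn) by (rewrite Rmult_assoc; apply Rmult_le_compat_l; lra).
  assert (alpha * (W * pj * (1 - g * (1 / INR Q))) * pk <= alpha * RQ * pk).
  { apply Rmult_le_compat_r; [lra|]. apply Rmult_le_compat_l; lra. }
  assert (pk * (pj * A + 1) <= alpha * (W * pj * (1 - g * (1 / INR Q))) * pk).
  { rewrite (Rmult_comm _ pk). apply Rmult_le_compat_l; lra. }
  lra.
Qed.

Lemma high_window N alpha : (1 <= N)%nat -> 0 < alpha -> alpha < b_seq s p h N ->
  exists P, (1 <= P)%nat /\ forall k r, (r < s ^ k)%nat -> alpha < b_seq s p h (P * s ^ k + r).
Proof.
  intros HN Hal Hb. unfold b_seq in Hb. fold g in Hb. fold a in Hb.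
  set (W := Rpower (INR N) g) in *. set (A := INR (a N)) in *.
  assert (HW : 0 < W) by apply Rpower_pos.
  assert (HA : 0 <= A) by apply pos_INR.
  assert (HAW : alpha * W < A).
  { apply (Rmult_lt_compat_r W) in Hb; auto. unfold Rdiv in Hb.
    rewrite Rmult_assoc, Rinv_l in Hb by lra. lra. }
  set (d := A - alpha * W).
  assert (Hd : 0 < d) by (unfold d; lra).
  pose proof g_nonneg as Hg.
  assert (Hc1 : 0 <= A * g / d).
  { apply Rmult_le_pos; [|left; apply Rinv_0_lt_compat; auto]. nra. }
  destruct (exists_pow_gt s (g + 1 + A * g / d) Hs) as [j [Hj1 Hj]].
  assert (Hsj1 : (1 <= s ^ j)%nat) by (apply Nat.neq_0_lt_0, Nat.pow_nonzero; lia).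
  exists (N * s ^ j)%nat. split; [nia|].
  intros k r Hr.
  set (P := (N * s ^ j)%nat).
  assert (HP1 : (1 <= P)%nat) by (unfold P; nia).
  assert (HPR : INR (s ^ j) <= INR P) by (apply le_INR; unfold P; nia).
  assert (HPpos : 0 < INR P) by (apply lt_0_INR; lia).
  destruct (block s p h Hs Hhp s eq_refl k P r HP1 Hr) as [Hlo _].
  destruct (block s p h Hs Hhp s eq_refl j N 0 HN ltac:(lia)) as [Hlo2 _].
  rewrite Nat.add_0_r in Hlo2. fold a P in Hlo, Hlo2.
  set (pk := INR (p ^ k)) in *. set (pj := INR (p ^ j)) in *.
  assert (Hpk : 0 < pk) by (apply pos_nat_pow; lia).
  assert (Hpj : 0 < pj) by (apply pos_nat_pow; lia).
  assert (Han : pk * (pj * A) <= INR (a (P * s ^ k + r))).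
  { apply le_INR in Hlo. apply le_INR in Hlo2. rewrite mult_INR in Hlo, Hlo2.
    fold pk pj A in Hlo, Hlo2. apply Rle_trans with (pk * INR (a P)); auto.
    apply Rmult_le_compat_l; lra. }
  set (Rn := Rpower (INR (P * s ^ k + r)) g).
  set (RP1 := Rpower (INR (P + 1)) g).
  assert (HRn : 0 < Rn) by apply Rpower_pos.
  assert (H1 : Rn <= RP1 * pk).
  { unfold RP1, pk, Rn, g. rewrite <- rp_mul by (auto; lia). apply Rle_Rpower_l; auto.
    split; [apply lt_0_INR; nia|]. apply le_INR. nia. }
  assert (H2 : RP1 * (1 - g * (1 / INR P)) <= W * pj).
  { unfold W, pj, RP1, g. rewrite <- rp_mul by (auto; lia). fold P.
    assert (INR P <= INR (P + 1)) by (apply le_INR; lia).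
    pose proof (rp_key (INR P) (INR (P + 1)) g HPpos H Hg) as K.
    replace (INR (P + 1) - INR P) with 1 in K by (rewrite plus_INR; simpl; lra). exact K. }
  set (e := 1 - g * (1 / INR P)).
  assert (He : 0 < e).
  { unfold e. apply (Rmult_lt_reg_r (INR P)); auto.
    replace ((1 - g * (1 / INR P)) * INR P) with (INR P - g) by (field; lra). lra. }
  assert (HAe : alpha * W < A * e).
  { unfold e. assert (K : A * g <= d * INR P - d).
    { assert (A * g / d <= INR P - 1) by lra.
      apply (Rmult_le_compat_r d) in H; [|lra].
      replace (A * g / d * d) with (A * g) in H by (field; lra). lra. }
    apply (Rmult_lt_reg_r (INR P)); auto.
    replace (A * (1 - g * (1 / INR P)) * INR P) with (A * INR P - A * g) by (field; lra).
    unfold d in *. nra. }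
  unfold b_seq. fold g. fold Rn. fold a.
  apply (Rmult_lt_reg_r Rn); auto. unfold Rdiv. rewrite Rmult_assoc, Rinv_l by lra.
  rewrite Rmult_1_r.
  apply (Rmult_lt_reg_r e); auto.
  assert (alpha * Rn * e <= alpha * (RP1 * pk) * e).
  { apply Rmult_le_compat_r; [lra|]. apply Rmult_le_compat_l; lra. }
  assert (alpha * (RP1 * pk) * e <= alpha * (W * pj) * pk).
  { replace (alpha * (RP1 * pk) * e) with (alpha * pk * (RP1 * e)) by ring.
    replace (alpha * (W * pj) * pk) with (alpha * pk * (W * pj)) by ring.
    apply Rmult_le_compat_l; [nra|]. exact H2. }
  assert (alpha * (W * pj) * pk < pk * (pj * A) * e).
  { replace (alpha * (W * pj) * pk) with ((pk * pj) * (alpha * W)) by ring.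
    replace (pk * (pj * A) * e) with ((pk * pj) * (A * e)) by ring.
    apply Rmult_lt_compat_l; [nra|]. exact HAe. }
  assert (pk * (pj * A) * e <= INR (a (P * s ^ k + r)) * e) by (apply Rmult_le_compat_r; lra).
  lra.
Qed.
End Win.

Lemma count_all (F : nat -> bool) m : forall st, (forall r, (r < m)%nat -> F (st + r)%nat = true) ->
  length (filter F (seq st m)) = m.
Proof.
  induction m as [|m IH]; intros st H; [reflexivity|].
  assert (H0 := H 0%nat ltac:(lia)). rewrite Nat.add_0_r in H0.
  simpl. rewrite H0. simpl. f_equal. apply IH. intros r Hr. replace (S st + r)%nat with (st + S r)%nat by lia.
  apply H; lia.
Qed.

Lemma count_none (F : nat -> bool) m : forall st, (forall r, (r < m)%nat -> F (st + r)%nat = false) ->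
  length (filter F (seq st m)) = 0%nat.
Proof.
  induction m as [|m IH]; intros st H; [reflexivity|].
  assert (H0 := H 0%nat ltac:(lia)). rewrite Nat.add_0_r in H0.
  simpl. rewrite H0. apply IH. intros r Hr. replace (S st + r)%nat with (st + S r)%nat by lia.
  apply H; lia.
Qed.

Lemma D_nat s p h alpha n : D_count s p h (INR n) alpha =
  length (filter (fun n => if Rle_dec (b_seq s p h n) alpha then true else false) (seq 1 n)).
Proof. unfold D_count. rewrite Int_part_INR, Nat2Z.id. reflexivity. Qed.

Lemma D_split s p h alpha x T : D_count s p h (INR (x + T)) alpha =
  (D_count s p h (INR x) alpha +
   length (filter (fun n => if Rle_dec (b_seq s p h n) alpha then true else false) (seq (1 + x) T)))%nat.
Proof. rewrite !D_nat. rewrite seq_app, filter_app, length_app. reflexivity. Qed.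

Lemma D_le s p h alpha n : (D_count s p h (INR n) alpha <= n)%nat.
Proof. rewrite D_nat. eapply Nat.le_trans; [apply filter_length_le|]. rewrite length_seq. lia. Qed.

Lemma win_est (L eps c T x1 D1 D2 : R) : 0 < x1 -> 0 < T ->
  Rabs (D1 / x1 - L) < eps -> Rabs (D2 / (x1 + T) - L) < eps -> D2 = D1 + c * T ->
  Rabs (c - L) * T <= eps * (2 * x1 + T).
Proof.
  intros Hx HT H1 H2 E.
  set (f1 := D1 / x1) in *. set (f2 := D2 / (x1 + T)) in *.
  assert (E1 : D1 = f1 * x1) by (unfold f1; field; lra).
  assert (E2 : D2 = f2 * (x1 + T)) by (unfold f2; field; lra).
  apply Rabs_def2 in H1. apply Rabs_def2 in H2.
  assert (K : (c - L) * T = (f2 - L) * (x1 + T) - (f1 - L) * x1) by (rewrite E in E2; nra).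
  rewrite <- (Rabs_pos_eq T) by lra. rewrite <- Rabs_mult, K.
  destruct H1 as [H1a H1b]. destruct H2 as [H2a H2b].
  assert (P1 : (f1 - L) * x1 < eps * x1) by (apply Rmult_lt_compat_r; lra).
  assert (P2 : - eps * x1 < (f1 - L) * x1) by (apply Rmult_lt_compat_r; lra).
  assert (P3 : (f2 - L) * (x1 + T) < eps * (x1 + T)) by (apply Rmult_lt_compat_r; lra).
  assert (P4 : - eps * (x1 + T) < (f2 - L) * (x1 + T)) by (apply Rmult_lt_compat_r; lra).
  rewrite (Rabs_pos_eq T) by lra. apply Rabs_le. split; lra.
Qed.

Open Scope R_scope.
Theorem theorem3 (p s : nat) (A : list nat) (h : nat -> nat)
  (Hp : (3 <= p)%nat) (Hs2 : (2 <= s)%nat) (Hsp : (s < p)%nat)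
  (HAnd : NoDup A) (HAlen : length A = s) (HAp : forall x, In x A -> (x < p)%nat)
  (HhA : forall i, (i < s)%nat -> In (h i) A)
  (Hhinc : forall i j, (i < j)%nat -> (j < s)%nat -> (h i < h j)%nat)
  (alpha : R)
  (Hm : Rbar_lt (Inf_seq (fun k => b_seq s p h (S k))) (Finite alpha))
  (HM : Rbar_lt (Finite alpha) (Sup_seq (fun k => b_seq s p h (S k)))) :
  ~ ex_lim (fun x => INR (D_count s p h x alpha) / x) p_infty.
Proof.
  assert (Hhp : forall i, (i < s)%nat -> (h i < p)%nat) by (intros; apply HAp, HhA; auto).
  assert (Hp2 : (2 <= p)%nat) by lia. assert (Hsp' : (s <= p)%nat) by lia.
  set (F := fun n => if Rle_dec (b_seq s p h n) alpha then true else false).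
  assert (Hbnn : forall n, 0 <= b_seq s p h n).
  { intros n. unfold b_seq. unfold Rdiv. apply Rmult_le_pos; [apply pos_INR|].
    left; apply Rinv_0_lt_compat, Rpower_pos. }
  assert (HN0 : exists N, (1 <= N)%nat /\ b_seq s p h N < alpha).
  { pose proof (Inf_seq_correct (fun k => b_seq s p h (S k))) as Hi.
    destruct (Inf_seq (fun k => b_seq s p h (S k))) as [l| |]; simpl in Hm.
    - assert (He : 0 < alpha - l) by lra.
      destruct (Hi (mkposreal _ He)) as [_ [n Hn]]. simpl in Hn.
      exists (S n). split; [lia|]. lra.
    - contradiction.
    - destruct (Hi alpha) as [n Hn]. exists (S n). split; [lia|]. simpl in Hn. exact Hn. }
  assert (HN1 : exists N, (1 <= N)%nat /\ alpha < b_seq s p h N).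
  { pose proof (Sup_seq_correct (fun k => b_seq s p h (S k))) as Hi.
    destruct (Sup_seq (fun k => b_seq s p h (S k))) as [l| |]; simpl in HM.
    - assert (He : 0 < l - alpha) by lra.
      destruct (Hi (mkposreal _ He)) as [_ [n Hn]]. simpl in Hn.
      exists (S n). split; [lia|]. lra.
    - destruct (Hi alpha) as [n Hn]. exists (S n). split; [lia|]. simpl in Hn. exact Hn.
    - contradiction. }
  destruct HN0 as [N0 [HN0 Hb0]]. destruct HN1 as [N1 [HN1 Hb1]].
  assert (Hal : 0 < alpha) by (pose proof (Hbnn N0); lra).
  destruct (low_window s p h Hs2 Hp2 Hsp' Hhp Hhinc N0 alpha HN0 Hb0) as [Q [HQ HQw]].
  destruct (high_window s p h Hs2 Hp2 Hsp' Hhp N1 alpha HN1 Hal Hb1) as [P [HP HPw]].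
  intros [l Hl]. apply is_lim_spec in Hl.
  destruct l as [L| |]; simpl in Hl.
  - set (eps := 1 / (4 * (INR Q + INR P + 1))).
    assert (HQR : 1 <= INR Q) by (apply (le_INR 1) in HQ; simpl in HQ; lra).
    assert (HPR : 1 <= INR P) by (apply (le_INR 1) in HP; simpl in HP; lra).
    assert (Heps : 0 < eps) by (unfold eps; apply Rdiv_lt_0_compat; lra).
    destruct (Hl (mkposreal eps Heps)) as [M HMl]. simpl in HMl.
    destruct (exists_pow_gt s (Rabs M + 3) Hs2) as [k [_ Hk]]. pose proof (Rle_abs M). pose proof (Rabs_pos M).
    set (T := (s ^ k)%nat) in *.
    assert (HT1 : (1 <= T)%nat) by (apply Nat.neq_0_lt_0, Nat.pow_nonzero; lia).
    assert (HT : 0 < INR T) by (apply lt_0_INR; lia).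
    assert (GEN : forall Qw c, (1 <= Qw)%nat -> length (filter F (seq (Qw * T) T)) = c ->
      Rabs (INR c / INR T - L) <= eps * (2 * INR Qw + 1)).
    { intros Qw c HQw1 Hc.
      set (x1 := (Qw * T - 1)%nat).
      assert (HQT : (1 <= Qw * T)%nat) by nia.
      assert (Ex1 : INR x1 = INR Qw * INR T - 1).
      { unfold x1. rewrite minus_INR, mult_INR by lia. simpl. ring. }
      assert (HQwR : 1 <= INR Qw) by (apply (le_INR 1) in HQw1; simpl in HQw1; lra).
      assert (INR T <= INR Qw * INR T) by (rewrite <- (Rmult_1_l (INR T)) at 1; apply Rmult_le_compat_r; lra).
      assert (Hx1 : M < INR x1) by lra.
      assert (HD : D_count s p h (INR x1 + INR T) alpha = (D_count s p h (INR x1) alpha + c)%nat).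
      { rewrite <- plus_INR, D_split. f_equal.
        replace (1 + x1)%nat with (Qw * T)%nat by (unfold x1; lia). exact Hc. }
      assert (Hx0 : 0 < INR x1) by lra.
      assert (Hx2 : M < INR x1 + INR T) by lra.
      assert (K := win_est L eps (INR c / INR T) (INR T) (INR x1)
        (INR (D_count s p h (INR x1) alpha)) (INR (D_count s p h (INR x1 + INR T) alpha))
        Hx0 HT (HMl _ Hx1) (HMl _ Hx2)).
      assert (K2 : Rabs (INR c / INR T - L) * INR T <= eps * (2 * INR x1 + INR T)).
      { apply K. rewrite HD, plus_INR. field. lra. }
      apply (Rmult_le_reg_r (INR T)); auto.
      apply Rle_trans with (1 := K2). rewrite Ex1. nra. }
    assert (L1 : Rabs (1 - L) <= eps * (2 * INR Q + 1)).
    { replace 1 with (INR T / INR T) at 1 by (field; lra). apply GEN; auto.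
      apply count_all. intros r Hr. unfold F.
      destruct (Rle_dec _ _) as [_|Hn]; auto. exfalso; apply Hn. apply HQw. exact Hr. }
    assert (L2 : Rabs (0 - L) <= eps * (2 * INR P + 1)).
    { replace 0 with (INR 0 / INR T) at 1 by (simpl; field; lra). apply GEN; auto.
      apply count_none. intros r Hr. unfold F.
      destruct (Rle_dec _ _) as [Hn|_]; auto. exfalso. assert (HH := HPw k r Hr). change (s ^ k)%nat with T in HH. lra. }
    assert (E : eps * (2 * INR Q + 1) + eps * (2 * INR P + 1) = 1 / 2).
    { unfold eps. field. lra. }
    assert (Rabs (1 - L) + Rabs (0 - L) >= 1).
    { unfold Rabs. destruct (Rcase_abs (1 - L)); destruct (Rcase_abs (0 - L)); lra. }
    lra.
  - destruct (Hl 1) as [M HMl].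
    destruct (exists_pow_gt s M Hs2) as [k [_ Hk]].
    specialize (HMl _ Hk).
    assert (HT1 : (1 <= s ^ k)%nat) by (apply Nat.neq_0_lt_0, Nat.pow_nonzero; lia).
    assert (HT : 0 < INR (s ^ k)) by (apply lt_0_INR; lia).
    pose proof (le_INR _ _ (D_le s p h alpha (s ^ k))).
    assert (INR (D_count s p h (INR (s ^ k)) alpha) / INR (s ^ k) <= 1).
    { apply (Rmult_le_reg_r (INR (s ^ k))); auto. field_simplify; lra. }
    lra.
  - destruct (Hl 0) as [M HMl].
    destruct (exists_pow_gt s M Hs2) as [k [_ Hk]].
    specialize (HMl _ Hk).
    assert (HT1 : (1 <= s ^ k)%nat) by (apply Nat.neq_0_lt_0, Nat.pow_nonzero; lia).
    assert (HT : 0 < INR (s ^ k)) by (apply lt_0_INR; lia).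
    assert (0 <= INR (D_count s p h (INR (s ^ k)) alpha) / INR (s ^ k)).
    { apply Rdiv_le_0_compat; auto. apply pos_INR. }
    lra.
Qed.
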